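(* Let $\sigma$ be a nonempty finite sequence of nonnegative integers avoiding both $010$ and $110$. Let $q$ be the largest value occurring at least twice in $\sigma$, or $q=0$ if there is none, and let $r$ be the number of distinct values of $\sigma$ that are $\geqslant q$. Then $\mathrm{forb}(\sigma,\{010,110\})=q+r$.
   Context: A sequence contains a pattern $p$ if some subsequence is order-isomorphic to $p$; otherwise it avoids $p$. Avoiding $010$: no $i<j<l$ with $\sigma_i=\sigma_l<\sigma_j$. Avoiding $110$: no $i<j<l$ with $\sigma_i=\sigma_j>\sigma_l$. For a sequence $\sigma$ avoiding a set of patterns $P$, a value $v\in\{0,\dots,\max(\sigma)\}$ is forbidden if the sequence $\sigma$ followed by $M$ and then $v$ contains some pattern of $P$, where $M>\max(\sigma)$; $\mathrm{forb}(\sigma,P)$ is the number of forbidden values. *)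

(* Defs.v *)
From mathcomp Require Import all_boot.
Set Implicit Arguments. Unset Strict Implicit. Unset Printing Implicit Defensive.

Definition order_iso (s p : seq nat) : bool :=
  (size s == size p) &&
  all (fun i => all (fun j =>
     ((nth 0 s i < nth 0 s j) == (nth 0 p i < nth 0 p j)) &&
     ((nth 0 s i == nth 0 s j) == (nth 0 p i == nth 0 p j)))
     (iota 0 (size s))) (iota 0 (size s)).

Fixpoint subseqs (s : seq nat) : seq (seq nat) :=
  match s with
  | [::] => [:: [::]]
  | x :: s' => let r := subseqs s' in [seq x :: t | t <- r] ++ r
  end.

Definition contains (s p : seq nat) : bool :=
  has (fun t => order_iso t p) (subseqs s).

Definition avoids (s p : seq nat) : bool := ~~ contains s p.

Definition maxs (s : seq nat) : nat := \max_(x <- s) x.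

Definition forbidden (P : seq (seq nat)) (s : seq nat) (v : nat) : bool :=
  has (contains (rcons (rcons s (maxs s).+1) v)) P.

Definition forb (s : seq nat) (P : seq (seq nat)) : nat :=
  count (forbidden P s) (iota 0 (maxs s).+1).

(* Main.v *)
Require Import Defs.
From mathcomp Require Import all_boot zify.

Lemma oi010 a b c : order_iso [:: a;b;c] [::0;1;0] = (a == c) && (a < b).
Proof.
rewrite /order_iso /= !ltnn !eqxx /=.
case: (ltngtP a b) => Hab; case: (ltngtP a c) => Hac; case: (ltngtP b c) => Hbc //=; lia.
Qed.
Lemma oi110 a b c : order_iso [:: a;b;c] [::1;1;0] = (a == b) && (c < a).
Proof.
rewrite /order_iso /= !ltnn !eqxx /=.
case: (ltngtP a b) => Hab; case: (ltngtP a c) => Hac; case: (ltngtP b c) => Hbc //=; lia.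
Qed.

Lemma subseqs_nil s : [::] \in subseqs s.
Proof. elim: s => [|x s IH] //=; by rewrite mem_cat IH orbT. Qed.

Lemma subseqs_cat s1 s2 t : t \in subseqs (s1 ++ s2) <->
  exists t1 t2, [/\ t1 \in subseqs s1, t2 \in subseqs s2 & t = t1 ++ t2].
Proof.
elim: s1 t => [|x s1 IH] t /=.
  split; first by move=> H; exists [::], t; rewrite inE.
  by case=> t1 [t2 [] ]; rewrite inE => /eqP -> H ->.
rewrite mem_cat; split.
  case/orP.
    case/mapP => u /IH [t1 [t2 [H1 H2 ->]]] ->.
    exists (x :: t1), t2; split => //; rewrite mem_cat; apply/orP; left.
    by apply/mapP; exists t1.
  move/IH => [t1 [t2 [H1 H2 ->]]]; exists t1, t2; split => //.
  by rewrite mem_cat H1 orbT.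
case=> t1 [t2 []]; rewrite mem_cat => /orP [/mapP [u Hu ->]|H1] H2 ->.
  apply/orP; left; apply/mapP; exists (u ++ t2) => //; apply/IH.
  by exists u, t2.
by apply/orP; right; apply/IH; exists t1, t2.
Qed.

Lemma subseqs_mem s t : t \in subseqs s -> all (mem s) t.
Proof.
elim: s t => [|x s IH] t /=; first by rewrite inE => /eqP ->.
rewrite mem_cat => /orP [/mapP [u Hu ->]|H]; apply/allP => y.
  rewrite in_cons => /orP [/eqP ->|Hy]; first exact: mem_head.
  by apply: mem_behead; move/allP: (IH _ Hu) => /(_ y Hy).
by move=> Hy; apply: mem_behead; move/allP: (IH _ H) => /(_ y Hy).
Qed.

Lemma subseqs1 a s : ([:: a] \in subseqs s) = (a \in s).
Proof.
elim: s => [|x s IH] //=; rewrite mem_cat inE IH.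
apply/idP/idP.
  case/orP => [/mapP [u Hu [-> _]]|->]; by rewrite ?eqxx ?orbT.
case/orP => [/eqP ->|->]; last by rewrite orbT.
by apply/orP; left; apply/mapP; exists [::] => //; apply: subseqs_nil.
Qed.

Lemma subseqs2 a s : ([:: a; a] \in subseqs s) = (1 < count_mem a s).
Proof.
elim: s => [|x s IH] //=; rewrite mem_cat IH.
have Hc : (a \in s) = (0 < count_mem a s) by rewrite -has_pred1 has_count.
apply/idP/idP.
  case/orP => [/mapP [u Hu [Ea Eu]]|H]; last by apply: leq_trans H _; rewrite leq_addl.
  subst u x; move: Hu; rewrite subseqs1 Hc eqxx /=; lia.
case: (eqVneq x a) => [->|Hxa] /= H.
  apply/orP; left; apply/mapP; exists [:: a] => //.
  by rewrite subseqs1 Hc; rewrite add1n ltnS in H.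
by rewrite add0n in H; rewrite H orbT.
Qed.

Lemma max_gt (P : pred nat) r v :
  (v < \max_(x <- r | P x) x) = has (fun a => P a && (v < a)) r.
Proof.
elim: r => [|x r IH]; first by rewrite big_nil.
rewrite big_cons /=; case: (P x) => /=; last by [].
by rewrite leq_max IH.
Qed.

Lemma le_maxs s a : a \in s -> a <= maxs s.
Proof.
rewrite /maxs; elim: s => [|x s IH] //; rewrite inE big_cons => /orP [/eqP ->|H].
  by rewrite leq_maxl.
by rewrite leq_max IH ?orbT.
Qed.

Theorem mainTheorem11 (s : seq nat) :
  s != [::] ->
  avoids s [:: 0; 1; 0] ->
  avoids s [:: 1; 1; 0] ->
  let q := \max_(x <- s | 1 < count_mem x s) x in
  let r := size [seq x <- undup s | q <= x] in
  forb s [:: [:: 0; 1; 0]; [:: 1; 1; 0]] = q + r.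
Proof.
move=> _ A1 A2 q r.
set m := maxs s.
have Hq : q <= m.
  rewrite leqNgt max_gt; apply/negP => /hasP [a Ha /andP [_ H]].
  by have := @le_maxs s _ Ha; rewrite -/m; lia.
have Hsub : forall v, [:: m.+1; v] \in subseqs [:: m.+1; v] by move=> v; rewrite /= !inE eqxx.
have HF : forall v, forbidden [:: [:: 0; 1; 0]; [:: 1; 1; 0]] s v = (v \in s) || (v < q).
  move=> v; rewrite /forbidden /= orbF /contains.
  rewrite -cats1 -cats1 -catA /=.
  apply/idP/idP.
    have N1 : forall t, t \in subseqs s -> order_iso t [:: 0; 1; 0] = false.
      by move=> t Ht; apply/negP => H; move/negP: A1; apply; apply/hasP; exists t.
    have N2 : forall t, t \in subseqs s -> order_iso t [:: 1; 1; 0] = false.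
      by move=> t Ht; apply/negP => H; move/negP: A2; apply; apply/hasP; exists t.
    have key : forall t, t \in subseqs (s ++ [:: m.+1; v]) ->
       order_iso t [:: 0; 1; 0] || order_iso t [:: 1; 1; 0] -> (v \in s) || (v < q).
      move=> t /subseqs_cat [t1 [t2 [H1 H2 ->]]] Ho.
      have Hs : size (t1 ++ t2) = 3.
        by case/orP: Ho => /andP [/eqP -> _].
      have Hall := @subseqs_mem s t1 H1.
      move: H2; rewrite /= !inE => /or4P [] /eqP E; subst t2; rewrite size_cat /= in Hs.
      { case: t1 H1 Hall Ho Hs => [|a [|b t1]] H1 Hall Ho Hs /=; try (simpl in Hs; lia).
        move: Hall => /= /andP [Ha _].
        move: Ho; rewrite /= oi010 oi110 => /orP [/andP [/eqP Ev _]|/andP [/eqP E _]].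
          by rewrite -Ev Ha.
        by move: (@le_maxs s _ Ha); rewrite E -/m; lia. }
      { case: t1 H1 Hall Ho Hs => [|a [|b [|c t1]]] H1 Hall Ho Hs /=; try (simpl in Hs; lia).
        move: Hall => /= /andP [Ha /andP [Hb _]].
        move: (@le_maxs s _ Ha) (@le_maxs s _ Hb); rewrite -/m => La Lb.
        move: Ho; rewrite /= oi010 oi110 => /orP [/andP [/eqP E _]|/andP [_ E]]; lia. }
      { case: t1 H1 Hall Ho Hs => [|a [|b [|c t1]]] H1 Hall Ho Hs /=; try (simpl in Hs; lia).
        move: Hall => /= /andP [Ha /andP [Hb _]].
        move: Ho; rewrite /= oi010 oi110 => /orP [/andP [/eqP Ev _]|/andP [/eqP E Hv]].
          by rewrite -Ev Ha.
        subst b; apply/orP; right; rewrite max_gt; apply/hasP; exists a => //.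
        by rewrite Hv -subseqs2 H1. }
      by move: Ho; rewrite cats0 N1 ?N2.
    case/orP => /hasP [t Ht Ho]; apply: (key t Ht); by rewrite Ho ?orbT.
  case/orP => [Hv|].
    apply/orP; left; apply/hasP; exists [:: v; m.+1; v].
      apply/subseqs_cat; exists [:: v], [:: m.+1; v]; split => //.
      by rewrite subseqs1.
    by rewrite oi010 eqxx ltnS le_maxs.
  rewrite max_gt => /hasP [a Ha /andP [Hc Hv]].
  apply/orP; right; apply/hasP; exists [:: a; a; v].
    apply/subseqs_cat; exists [:: a; a], [:: v]; split => //.
      by rewrite subseqs2.
    by rewrite /= !inE eqxx !orbT.
  by rewrite oi110 eqxx.
rewrite /forb (eq_count HF) -/m.
have -> : m.+1 = q + (m.+1 - q) by lia.
rewrite iotaD count_cat add0n.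
have -> : count (fun v => (v \in s) || (v < q)) (iota 0 q) = q.
  rewrite (eq_in_count (a2 := predT)) ?count_predT ?size_iota //.
  by move=> x; rewrite mem_iota add0n => /andP [_ ->]; rewrite orbT.
congr (_ + _).
rewrite (eq_in_count (a2 := mem s)); last first.
  by move=> x; rewrite mem_iota => /andP [H _]; rewrite ltnNge H orbF.
rewrite -size_filter /r; apply: perm_size; apply: uniq_perm.
- by apply: filter_uniq; apply: iota_uniq.
- by apply: filter_uniq; apply: undup_uniq.
move=> x; rewrite !mem_filter mem_iota mem_undup.
apply/idP/idP => [/and3P [H1 H2 _]|/andP [H1 H2]]; first by rewrite H2.
apply/and3P; split => //; have := @le_maxs s _ H2; rewrite -/m; lia.
Qed.
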